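(* Every well-typed $\lambda\mu\mathrm{T}$-term is strongly normalizing: if $\Gamma;\Delta\vdash t:\rho$, then there is no infinite reduction sequence $t\to t_1\to t_2\to\cdots$.
   Context: The calculus $\lambda\mu\mathrm{T}$. Types: $\rho,\sigma,\tau ::= \mathbb{N} \mid \sigma\to\tau$. Over infinite sets of $\lambda$-variables $x,y,\dots$ and $\mu$-variables $\alpha,\beta,\gamma,\dots$, terms and commands are mutually defined by $t,r,s ::= x \mid \lambda x{:}\rho.r \mid t\,s \mid \mu\alpha{:}\rho.c \mid 0 \mid \mathsf{S}\,t \mid \mathsf{nrec}_\rho\ r\ s\ t$ and $c ::= [\alpha]t$ (type annotations often omitted). $\lambda x$ binds $x$, $\mu\alpha$ binds $\alpha$; terms are considered modulo renaming of bound variables; $FV(t)$, $FCV(t)$ are the free $\lambda$- and $\mu$-variables. $t[x:=r]$ is capture-avoiding substitution. Numerals: $\underline{n} := \mathsf{S}^n 0$. Contexts: $E ::= \Box \mid E\,t \mid \mathsf{S}\,E \mid \mathsf{nrec}\ r\ s\ E$; $E[u]$ is the result of filling the hole with $u$. Structural substitution $t[\alpha:=\beta E]$ ($\beta$ a $\mu$-variable, $E$ a context) is defined homomorphically on all constructs (capture-avoiding for both kinds of variables) except $([\alpha]u)[\alpha:=\beta E] := [\beta]E[u[\alpha:=\beta E]]$ (and $([\gamma]u)[\alpha:=\beta E]:=[\gamma](u[\alpha:=\beta E])$ for $\gamma\neq\alpha$). Typing judgments $\Gamma;\Delta\vdash t:\rho$ and $\Gamma;\Delta\vdash c$ ($\Gamma$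 assigns types to $\lambda$-variables, $\Delta$ to $\mu$-variables) are generated by: (var) $x:\rho\in\Gamma \Rightarrow \Gamma;\Delta\vdash x:\rho$; (lambda) $\Gamma,x:\sigma;\Delta\vdash t:\tau \Rightarrow \Gamma;\Delta\vdash\lambda x{:}\sigma.t:\sigma\to\tau$; (app) $\Gamma;\Delta\vdash t:\sigma\to\tau$ and $\Gamma;\Delta\vdash s:\sigma$ $\Rightarrow \Gamma;\Delta\vdash ts:\tau$; (zero) $\Gamma;\Delta\vdash 0:\mathbb{N}$; (suc) $\Gamma;\Delta\vdash t:\mathbb{N}\Rightarrow\Gamma;\Delta\vdash \mathsf{S}\,t:\mathbb{N}$; (nrec) $\Gamma;\Delta\vdash r:\rho$, $\Gamma;\Delta\vdash s:\mathbb{N}\to\rho\to\rho$, $\Gamma;\Delta\vdash t:\mathbb{N}$ $\Rightarrow \Gamma;\Delta\vdash\mathsf{nrec}_\rho\ r\ s\ t:\rho$; (activate) $\Gamma;\Delta,\alpha:\rho\vdash c\Rightarrow\Gamma;\Delta\vdash\mu\alpha{:}\rho.c:\rho$; (passivate) $\Gamma;\Delta\vdash t:\rho$ and $\alpha:\rho\in\Delta$ $\Rightarrow \Gamma;\Delta\vdash[\alpha]t$. Reduction $\to$ is the compatible closure (on terms and commands) of: ($\beta$) $(\lambda x.t)r\to t[x:=r]$; ($\mu\mathsf{S}$) $\mathsf{S}(\mu\alpha.c)\to\mu\alpha.c[\alpha:=\alpha(\mathsf{S}\,\Box)]$; ($\mu R$) $(\mu\alpha.c)s\to\mu\alpha.c[\alpha:=\alpha(\Box\,s)]$;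 ($\mu\eta$) $\mu\alpha.[\alpha]t\to t$ if $\alpha\notin FCV(t)$; ($\mu i$) $[\alpha]\mu\beta.c\to c[\beta:=\alpha\,\Box]$; ($0$) $\mathsf{nrec}\ r\ s\ 0\to r$; ($\mathsf{S}$) $\mathsf{nrec}\ r\ s\ (\mathsf{S}\,\underline{n})\to s\ \underline{n}\ (\mathsf{nrec}\ r\ s\ \underline{n})$; ($\mu\mathbb{N}$) $\mathsf{nrec}\ r\ s\ (\mu\alpha.c)\to\mu\alpha.c[\alpha:=\alpha(\mathsf{nrec}\ r\ s\ \Box)]$. *)

(* Defs.v *)
(* The calculus lambda-mu-T, Church style, locally nameless-free
   de Bruijn representation: lambda-variables and mu-variables are two separate
   kinds of de Bruijn indices. *)
From Stdlib Require Import List Arith.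

Inductive ty : Type :=
| TNat : ty
| Arr : ty -> ty -> ty.

(* Terms and commands.  [Var n] is the lambda-variable with index n;
   [Lam A t] = lambda x:A. t (binds lambda-index 0 in t);
   [Mu A c]  = mu alpha:A. c (binds mu-index 0 in c);
   [Nrec A r s t] = nrec_A r s t;  [Pass a t] = [alpha_a] t. *)
Inductive tm : Type :=
| Var : nat -> tm
| Lam : ty -> tm -> tm
| App : tm -> tm -> tm
| Mu : ty -> cmd -> tm
| Zero : tm
| Suc : tm -> tm
| Nrec : ty -> tm -> tm -> tm -> tm
with cmd : Type :=
| Pass : nat -> tm -> cmd.

Fixpoint numeral (n : nat) : tm :=
  match n with 0 => Zero | S m => Suc (numeral m) end.

Definition up (f : nat -> nat) : nat -> nat :=
  fun n => match n with 0 => 0 | S m => S (f m) end.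

Fixpoint ren_tm (xi zeta : nat -> nat) (t : tm) : tm :=
  match t with
  | Var n => Var (xi n)
  | Lam A b => Lam A (ren_tm (up xi) zeta b)
  | App a b => App (ren_tm xi zeta a) (ren_tm xi zeta b)
  | Mu A c => Mu A (ren_cmd xi (up zeta) c)
  | Zero => Zero
  | Suc a => Suc (ren_tm xi zeta a)
  | Nrec A r s u => Nrec A (ren_tm xi zeta r) (ren_tm xi zeta s) (ren_tm xi zeta u)
  end
with ren_cmd (xi zeta : nat -> nat) (c : cmd) : cmd :=
  match c with
  | Pass a u => Pass (zeta a) (ren_tm xi zeta u)
  end.

Definition lift_lam (t : tm) : tm := ren_tm S (fun n => n) t.
Definition lift_mu (t : tm) : tm := ren_tm (fun n => n) S t.

Definition up_sub (sigma : nat -> tm) : nat -> tm :=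
  fun n => match n with 0 => Var 0 | S m => lift_lam (sigma m) end.

Fixpoint subst_tm (sigma : nat -> tm) (t : tm) : tm :=
  match t with
  | Var n => sigma n
  | Lam A b => Lam A (subst_tm (up_sub sigma) b)
  | App a b => App (subst_tm sigma a) (subst_tm sigma b)
  | Mu A c => Mu A (subst_cmd (fun n => lift_mu (sigma n)) c)
  | Zero => Zero
  | Suc a => Suc (subst_tm sigma a)
  | Nrec A r s u => Nrec A (subst_tm sigma r) (subst_tm sigma s) (subst_tm sigma u)
  end
with subst_cmd (sigma : nat -> tm) (c : cmd) : cmd :=
  match c with
  | Pass a u => Pass a (subst_tm sigma u)
  end.

(* t[x := r] where x is lambda-index 0 (which is removed) *)
Definition subst1 (t r : tm) : tm :=
  subst_tm (fun n => match n with 0 => r | S m => Var m end) t.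

Inductive ectx : Type :=
| Hole : ectx
| EApp : ectx -> tm -> ectx
| ESuc : ectx -> ectx
| ENrec : ty -> tm -> tm -> ectx -> ectx.

Fixpoint fill (E : ectx) (u : tm) : tm :=
  match E with
  | Hole => u
  | EApp E' t => App (fill E' u) t
  | ESuc E' => Suc (fill E' u)
  | ENrec A r s E' => Nrec A r s (fill E' u)
  end.

Fixpoint ren_ectx (xi zeta : nat -> nat) (E : ectx) : ectx :=
  match E with
  | Hole => Hole
  | EApp E' t => EApp (ren_ectx xi zeta E') (ren_tm xi zeta t)
  | ESuc E' => ESuc (ren_ectx xi zeta E')
  | ENrec A r s E' => ENrec A (ren_tm xi zeta r) (ren_tm xi zeta s) (ren_ectx xi zeta E')
  end.

(* Structural substitution t[alpha := alpha E] where alpha is mu-index k: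
   every command [alpha]u becomes [alpha] E[u[alpha := alpha E]]. *)
Fixpoint ssub_tm (k : nat) (E : ectx) (t : tm) : tm :=
  match t with
  | Var n => Var n
  | Lam A b => Lam A (ssub_tm k (ren_ectx S (fun n => n) E) b)
  | App a b => App (ssub_tm k E a) (ssub_tm k E b)
  | Mu A c => Mu A (ssub_cmd (S k) (ren_ectx (fun n => n) S E) c)
  | Zero => Zero
  | Suc a => Suc (ssub_tm k E a)
  | Nrec A r s u => Nrec A (ssub_tm k E r) (ssub_tm k E s) (ssub_tm k E u)
  end
with ssub_cmd (k : nat) (E : ectx) (c : cmd) : cmd :=
  match c with
  | Pass a u =>
      if Nat.eqb a k then Pass a (fill E (ssub_tm k E u))
      else Pass a (ssub_tm k E u)
  end.

Inductive has_type : list ty -> list ty -> tm -> ty -> Prop :=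
| T_Var : forall G D n A, nth_error G n = Some A -> has_type G D (Var n) A
| T_Lam : forall G D A B b, has_type (A :: G) D b B -> has_type G D (Lam A b) (Arr A B)
| T_App : forall G D A B t s,
    has_type G D t (Arr A B) -> has_type G D s A -> has_type G D (App t s) B
| T_Zero : forall G D, has_type G D Zero TNat
| T_Suc : forall G D t, has_type G D t TNat -> has_type G D (Suc t) TNat
| T_Nrec : forall G D A r s t,
    has_type G D r A -> has_type G D s (Arr TNat (Arr A A)) -> has_type G D t TNat ->
    has_type G D (Nrec A r s t) A
| T_Mu : forall G D A c, cmd_ok G (A :: D) c -> has_type G D (Mu A c) A
with cmd_ok : list ty -> list ty -> cmd -> Prop :=
| T_Pass : forall G D a A t,
    has_type G D t A -> nth_error D a = Some A -> cmd_ok G D (Pass a t).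

Inductive step : tm -> tm -> Prop :=
| R_beta : forall A b r, step (App (Lam A b) r) (subst1 b r)
| R_muS : forall A c, step (Suc (Mu A c)) (Mu A (ssub_cmd 0 (ESuc Hole) c))
| R_muR : forall A B c s,
    step (App (Mu (Arr A B) c) s) (Mu B (ssub_cmd 0 (EApp Hole (lift_mu s)) c))
| R_muEta : forall A t, step (Mu A (Pass 0 (lift_mu t))) t
| R_rec0 : forall A r s, step (Nrec A r s Zero) r
| R_recS : forall A r s n,
    step (Nrec A r s (Suc (numeral n)))
         (App (App s (numeral n)) (Nrec A r s (numeral n)))
| R_muN : forall A B r s c,
    step (Nrec A r s (Mu B c))
         (Mu A (ssub_cmd 0 (ENrec A (lift_mu r) (lift_mu s) Hole) c))
| C_Lam : forall A b b', step b b' -> step (Lam A b) (Lam A b')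
| C_AppL : forall t t' s, step t t' -> step (App t s) (App t' s)
| C_AppR : forall t s s', step s s' -> step (App t s) (App t s')
| C_Mu : forall A c c', step_cmd c c' -> step (Mu A c) (Mu A c')
| C_Suc : forall t t', step t t' -> step (Suc t) (Suc t')
| C_NrecR : forall A r r' s t, step r r' -> step (Nrec A r s t) (Nrec A r' s t)
| C_NrecS : forall A r s s' t, step s s' -> step (Nrec A r s t) (Nrec A r s' t)
| C_NrecT : forall A r s t t', step t t' -> step (Nrec A r s t) (Nrec A r s t')
with step_cmd : cmd -> cmd -> Prop :=
| R_muI : forall a A c,
    step_cmd (Pass a (Mu A c))
             (ren_cmd (fun n => n) (fun n => match n with 0 => a | S m => m end) c)
| C_Pass : forall a t t', step t t' -> step_cmd (Pass a t) (Pass a t').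

(* Main.v *)
Require Import Defs.
From Stdlib Require Import List Arith Lia Relations FunctionalExtensionality Wf_nat.


Scheme tm_mut := Induction for tm Sort Prop
with cmd_mut := Induction for cmd Sort Prop.
Combined Scheme tm_cmd_mut from tm_mut, cmd_mut.

Inductive st : tm -> tm -> Prop :=
| S_beta : forall A b r, st (App (Lam A b) r) (subst1 b r)
| S_muS : forall A c, st (Suc (Mu A c)) (Mu A (ssub_cmd 0 (ESuc Hole) c))
| S_muR : forall A B c s,
    st (App (Mu A c) s) (Mu B (ssub_cmd 0 (EApp Hole (lift_mu s)) c))
| S_muEta : forall A t, st (Mu A (Pass 0 (lift_mu t))) t
| S_rec0 : forall A r s, st (Nrec A r s Zero) r
| S_recS : forall A r s n,
    st (Nrec A r s (Suc (numeral n)))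
         (App (App s (numeral n)) (Nrec A r s (numeral n)))
| S_muN : forall A B r s c,
    st (Nrec A r s (Mu B c))
         (Mu A (ssub_cmd 0 (ENrec A (lift_mu r) (lift_mu s) Hole) c))
| SC_Lam : forall A b b', st b b' -> st (Lam A b) (Lam A b')
| SC_AppL : forall t t' s, st t t' -> st (App t s) (App t' s)
| SC_AppR : forall t s s', st s s' -> st (App t s) (App t s')
| SC_Mu : forall A c c', st_cmd c c' -> st (Mu A c) (Mu A c')
| SC_Suc : forall t t', st t t' -> st (Suc t) (Suc t')
| SC_NrecR : forall A r r' s t, st r r' -> st (Nrec A r s t) (Nrec A r' s t)
| SC_NrecS : forall A r s s' t, st s s' -> st (Nrec A r s t) (Nrec A r s' t)
| SC_NrecT : forall A r s t t', st t t' -> st (Nrec A r s t) (Nrec A r s t')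
with st_cmd : cmd -> cmd -> Prop :=
| S_muI : forall a A c,
    st_cmd (Pass a (Mu A c))
             (ren_cmd (fun n => n) (fun n => match n with 0 => a | S m => m end) c)
| SC_Pass : forall a t t', st t t' -> st_cmd (Pass a t) (Pass a t').

Scheme st_mut := Induction for st Sort Prop
with st_cmd_mut := Induction for st_cmd Sort Prop.
Scheme step_mut := Induction for step Sort Prop
with step_cmd_mut := Induction for step_cmd Sort Prop.
Combined Scheme step_both from step_mut, step_cmd_mut.
Combined Scheme st_both from st_mut, st_cmd_mut.

Lemma step_st : (forall t t', step t t' -> st t t') /\ (forall c c', step_cmd c c' -> st_cmd c c').
Proof.
  apply step_both; intros; try (econstructor; eauto; fail).
Qed.

Inductive st_ectx : ectx -> ectx -> Prop :=
| SE_AppL : forall E E' t, st_ectx E E' -> st_ectx (EApp E t) (EApp E' t)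
| SE_AppR : forall E t t', st t t' -> st_ectx (EApp E t) (EApp E t')
| SE_Suc : forall E E', st_ectx E E' -> st_ectx (ESuc E) (ESuc E')
| SE_NrecR : forall A r r' s E, st r r' -> st_ectx (ENrec A r s E) (ENrec A r' s E)
| SE_NrecS : forall A r s s' E, st s s' -> st_ectx (ENrec A r s E) (ENrec A r s' E)
| SE_NrecE : forall A r s E E', st_ectx E E' -> st_ectx (ENrec A r s E) (ENrec A r s E').

Definition SN := Acc (fun a b => st b a).
Definition SNc := Acc (fun a b => st_cmd b a).
Definition SNE := Acc (fun a b => st_ectx b a).

Fixpoint ecomp (E1 E2 : ectx) : ectx :=
  match E1 with
  | Hole => E2
  | EApp E t => EApp (ecomp E E2) t
  | ESuc E => ESuc (ecomp E E2)
  | ENrec A r s E => ENrec A r s (ecomp E E2)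
  end.

Fixpoint esize (E : ectx) : nat :=
  match E with
  | Hole => 0
  | EApp E _ => S (esize E)
  | ESuc E => S (esize E)
  | ENrec _ _ _ E => S (esize E)
  end.

Lemma fill_ecomp : forall E1 E2 t, fill (ecomp E1 E2) t = fill E1 (fill E2 t).
Proof. induction E1; simpl; intros; congruence. Qed.

Lemma ecomp_Hole_r : forall E, ecomp E Hole = E.
Proof. induction E; simpl; congruence. Qed.

Lemma ecomp_assoc : forall E1 E2 E3, ecomp (ecomp E1 E2) E3 = ecomp E1 (ecomp E2 E3).
Proof. induction E1; simpl; intros; congruence. Qed.

Lemma esize_ecomp : forall E1 E2, esize (ecomp E1 E2) = esize E1 + esize E2.
Proof. induction E1; simpl; intros; auto. Qed.

Lemma ren_fill : forall xi zeta E t,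
  ren_tm xi zeta (fill E t) = fill (ren_ectx xi zeta E) (ren_tm xi zeta t).
Proof. induction E; simpl; intros; congruence. Qed.

Lemma ren_ecomp : forall xi zeta E1 E2,
  ren_ectx xi zeta (ecomp E1 E2) = ecomp (ren_ectx xi zeta E1) (ren_ectx xi zeta E2).
Proof. induction E1; simpl; intros; congruence. Qed.

Definition thL (th : nat -> nat * ectx) : nat -> nat * ectx :=
  fun a => (fst (th a), ren_ectx S (fun n => n) (snd (th a))).
Definition thM (th : nat -> nat * ectx) : nat -> nat * ectx :=
  fun a => match a with
           | 0 => (0, Hole)
           | S m => (S (fst (th m)), ren_ectx (fun n => n) S (snd (th m)))
           end.

Fixpoint gs (sg : nat -> tm) (th : nat -> nat * ectx) (t : tm) : tm :=
  match t with
  | Var n => sg n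
  | Lam A b => Lam A (gs (up_sub sg) (thL th) b)
  | App a b => App (gs sg th a) (gs sg th b)
  | Mu A c => Mu A (gsc (fun n => lift_mu (sg n)) (thM th) c)
  | Zero => Zero
  | Suc a => Suc (gs sg th a)
  | Nrec A r s u => Nrec A (gs sg th r) (gs sg th s) (gs sg th u)
  end
with gsc (sg : nat -> tm) (th : nat -> nat * ectx) (c : cmd) : cmd :=
  match c with
  | Pass a u => Pass (fst (th a)) (fill (snd (th a)) (gs sg th u))
  end.

Fixpoint gsE (sg : nat -> tm) (th : nat -> nat * ectx) (E : ectx) : ectx :=
  match E with
  | Hole => Hole
  | EApp E t => EApp (gsE sg th E) (gs sg th t)
  | ESuc E => ESuc (gsE sg th E)
  | ENrec A r s E => ENrec A (gs sg th r) (gs sg th s) (gsE sg th E)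
  end.

Lemma gs_fill : forall sg th E t, gs sg th (fill E t) = fill (gsE sg th E) (gs sg th t).
Proof. induction E; simpl; intros; congruence. Qed.

Lemma gsE_ecomp : forall sg th E1 E2,
  gsE sg th (ecomp E1 E2) = ecomp (gsE sg th E1) (gsE sg th E2).
Proof. induction E1; simpl; intros; congruence. Qed.

Ltac fext := apply functional_extensionality; intros.

Lemma ren_ren :
  (forall t xi zeta xi' zeta', ren_tm xi zeta (ren_tm xi' zeta' t)
     = ren_tm (fun n => xi (xi' n)) (fun n => zeta (zeta' n)) t) /\
  (forall c xi zeta xi' zeta', ren_cmd xi zeta (ren_cmd xi' zeta' c)
     = ren_cmd (fun n => xi (xi' n)) (fun n => zeta (zeta' n)) c).
Proof.
  apply tm_cmd_mut; intros; simpl; rewrite ?H, ?H0, ?H1; try reflexivity;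
  f_equal; f_equal; fext; destruct x; reflexivity.
Qed.

Lemma ren_renE : forall E xi zeta xi' zeta', ren_ectx xi zeta (ren_ectx xi' zeta' E)
     = ren_ectx (fun n => xi (xi' n)) (fun n => zeta (zeta' n)) E.
Proof. induction E; simpl; intros; rewrite ?IHE, ?(proj1 ren_ren); reflexivity. Qed.

Lemma ren_id :
  (forall t, ren_tm (fun n => n) (fun n => n) t = t) /\
  (forall c, ren_cmd (fun n => n) (fun n => n) c = c).
Proof.
  assert (E : up (fun n => n) = (fun n : nat => n)) by (fext; destruct x; auto).
  apply tm_cmd_mut; intros; simpl; rewrite ?E, ?H, ?H0, ?H1; try reflexivity.
Qed.

Lemma ren_idE : forall E, ren_ectx (fun n => n) (fun n => n) E = E.
Proof. induction E; simpl; rewrite ?IHE, ?(proj1 ren_id); reflexivity. Qed.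



Lemma gs_ren :
  (forall t sg th xi zeta, gs sg th (ren_tm xi zeta t)
     = gs (fun n => sg (xi n)) (fun a => th (zeta a)) t) /\
  (forall c sg th xi zeta, gsc sg th (ren_cmd xi zeta c)
     = gsc (fun n => sg (xi n)) (fun a => th (zeta a)) c).
Proof.
  apply tm_cmd_mut; intros; simpl; rewrite ?H, ?H0, ?H1; try reflexivity;
  f_equal; f_equal; fext; destruct x; reflexivity.
Qed.

Lemma gsE_ren : forall E sg th xi zeta, gsE sg th (ren_ectx xi zeta E)
     = gsE (fun n => sg (xi n)) (fun a => th (zeta a)) E.
Proof. induction E; simpl; intros; rewrite ?IHE, ?(proj1 gs_ren); reflexivity. Qed.

Definition renth xi zeta (th : nat -> nat * ectx) : nat -> nat * ectx :=
  fun a => (zeta (fst (th a)), ren_ectx xi zeta (snd (th a))).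

Lemma ren_gs :
  (forall t sg th xi zeta, ren_tm xi zeta (gs sg th t)
     = gs (fun n => ren_tm xi zeta (sg n)) (renth xi zeta th) t) /\
  (forall c sg th xi zeta, ren_cmd xi zeta (gsc sg th c)
     = gsc (fun n => ren_tm xi zeta (sg n)) (renth xi zeta th) c).
Proof.
  apply tm_cmd_mut; intros; simpl; rewrite ?H, ?H0, ?H1; try reflexivity.
  - f_equal; f_equal; fext.
    + destruct x; simpl; [reflexivity|]. unfold lift_lam. rewrite !(proj1 ren_ren). reflexivity.
    + unfold renth, thL; simpl. rewrite !ren_renE. reflexivity.
  - f_equal; f_equal; fext.
    + unfold lift_mu. rewrite !(proj1 ren_ren). reflexivity.
    + unfold renth, thM; destruct x; simpl; [reflexivity|]. rewrite !ren_renE. reflexivity.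
  - rewrite ren_fill, H. reflexivity.
Qed.

Lemma ren_gsE : forall E sg th xi zeta, ren_ectx xi zeta (gsE sg th E)
     = gsE (fun n => ren_tm xi zeta (sg n)) (renth xi zeta th) E.
Proof. induction E; simpl; intros; rewrite ?IHE, ?(proj1 ren_gs); reflexivity. Qed.

Lemma ren_as_gs :
  (forall t xi zeta, ren_tm xi zeta t = gs (fun n => Var (xi n)) (fun a => (zeta a, Hole)) t) /\
  (forall c xi zeta, ren_cmd xi zeta c = gsc (fun n => Var (xi n)) (fun a => (zeta a, Hole)) c).
Proof.
  apply tm_cmd_mut; intros; simpl; rewrite ?H, ?H0, ?H1; try reflexivity;
  f_equal; f_equal; fext; destruct x; reflexivity.
Qed.

Lemma ren_as_gsE : forall E xi zeta,
  ren_ectx xi zeta E = gsE (fun n => Var (xi n)) (fun a => (zeta a, Hole)) E.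
Proof. induction E; simpl; intros; rewrite ?IHE, <- ?(proj1 ren_as_gs); reflexivity. Qed.

Lemma gs_id : forall t, gs Var (fun a => (a, Hole)) t = t.
Proof. intros. pose proof (proj1 ren_as_gs t (fun n => n) (fun n => n)).
  rewrite (proj1 ren_id) in H. symmetry. exact H. Qed.
Lemma gsc_id : forall c, gsc Var (fun a => (a, Hole)) c = c.
Proof. intros. pose proof (proj2 ren_as_gs c (fun n => n) (fun n => n)).
  rewrite (proj2 ren_id) in H. symmetry. exact H. Qed.
Lemma gsE_id : forall E, gsE Var (fun a => (a, Hole)) E = E.
Proof. intros. pose proof (ren_as_gsE E (fun n => n) (fun n => n)).
  rewrite ren_idE in H. symmetry. exact H. Qed.

Definition compth (th th' : nat -> nat * ectx) sg' : nat -> nat * ectx :=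
  fun a => (fst (th' (fst (th a))), ecomp (snd (th' (fst (th a)))) (gsE sg' th' (snd (th a)))).

Lemma gs_gs :
  (forall t sg th sg' th', gs sg' th' (gs sg th t)
     = gs (fun n => gs sg' th' (sg n)) (compth th th' sg') t) /\
  (forall c sg th sg' th', gsc sg' th' (gsc sg th c)
     = gsc (fun n => gs sg' th' (sg n)) (compth th th' sg') c).
Proof.
  apply tm_cmd_mut; intros; simpl; rewrite ?H, ?H0, ?H1; try reflexivity.
  - f_equal; f_equal; fext.
    + destruct x; simpl; [reflexivity|]. unfold lift_lam.
      rewrite (proj1 gs_ren), (proj1 ren_gs). reflexivity.
    + unfold compth, thL; simpl. rewrite ren_ecomp, gsE_ren, ren_gsE. reflexivity.
  - f_equal; f_equal; fext.
    + unfold lift_mu. rewrite (proj1 gs_ren), (proj1 ren_gs). reflexivity.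
    + unfold compth, thM; destruct x; simpl; [reflexivity|].
      rewrite ren_ecomp, gsE_ren, ren_gsE. reflexivity.
  - rewrite gs_fill, H, fill_ecomp. reflexivity.
Qed.

Lemma gsE_gsE : forall E sg th sg' th', gsE sg' th' (gsE sg th E)
     = gsE (fun n => gs sg' th' (sg n)) (compth th th' sg') E.
Proof. induction E; simpl; intros; rewrite ?IHE, ?(proj1 gs_gs); reflexivity. Qed.



Definition idth : nat -> nat * ectx := fun a => (a, Hole).
Definition thk (k : nat) (E : ectx) : nat -> nat * ectx :=
  fun a => if Nat.eqb a k then (a, E) else (a, Hole).
Definition sc1 (r : tm) : nat -> tm := fun n => match n with 0 => r | S m => Var m end.
Definition thbE (b : nat) (E : ectx) : nat -> nat * ectx :=
  fun a => match a with 0 => (b, E) | S m => (m, Hole) end.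

Lemma subst_as_gs :
  (forall t sg, subst_tm sg t = gs sg idth t) /\
  (forall c sg, subst_cmd sg c = gsc sg idth c).
Proof.
  apply tm_cmd_mut; intros; simpl; rewrite ?H, ?H0, ?H1; try reflexivity.
  f_equal; f_equal; fext; destruct x; reflexivity.
Qed.

Lemma ssub_as_gs :
  (forall t k E, ssub_tm k E t = gs Var (thk k E) t) /\
  (forall c k E, ssub_cmd k E c = gsc Var (thk k E) c).
Proof.
  apply tm_cmd_mut; intros; simpl; rewrite ?H, ?H0, ?H1; try reflexivity.
  - f_equal; f_equal; fext.
    + destruct x; reflexivity.
    + unfold thL, thk. destruct (Nat.eqb x k); reflexivity.
  - f_equal; f_equal; fext.
    + unfold thM, thk. destruct x; simpl; [reflexivity|]. destruct (Nat.eqb x k); reflexivity.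
  - unfold thk. destruct (Nat.eqb n k); simpl; reflexivity.
Qed.

Lemma subst1_gs : forall t r, subst1 t r = gs (sc1 r) idth t.
Proof. intros. unfold subst1. rewrite (proj1 subst_as_gs). reflexivity. Qed.

Lemma gs_numeral : forall sg th n, gs sg th (numeral n) = numeral n.
Proof. induction n; simpl; congruence. Qed.

Lemma ren_numeral : forall xi zeta n, ren_tm xi zeta (numeral n) = numeral n.
Proof. induction n; simpl; congruence. Qed.

Lemma gs_id' : forall t f g, (forall n, f n = Var n) -> (forall a, g a = (a, Hole)) -> gs f g t = t.
Proof. intros. replace f with Var by (symmetry; fext; auto).
  replace g with (fun a : nat => (a, Hole)) by (symmetry; fext; auto). apply gs_id. Qed.
Lemma gsE_id' : forall E f g, (forall n, f n = Var n) -> (forall a, g a = (a, Hole)) -> gsE f g E = E.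
Proof. intros. replace f with Var by (symmetry; fext; auto).
  replace g with (fun a : nat => (a, Hole)) by (symmetry; fext; auto). apply gsE_id. Qed.

Lemma gs_thbE_lift : forall b E s, gs Var (thbE b E) (lift_mu s) = s.
Proof. intros. unfold lift_mu. rewrite (proj1 gs_ren). exact (gs_id s). Qed.

Lemma gs_thk0_lift : forall E s, gs Var (thk 0 E) (lift_mu s) = lift_mu s.
Proof. intros. unfold lift_mu. rewrite (proj1 gs_ren).
  rewrite (proj1 ren_as_gs). reflexivity. Qed.
Lemma gsE_thk0_lift : forall E F, gsE Var (thk 0 E) (ren_ectx (fun n => n) S F)
   = ren_ectx (fun n => n) S F.
Proof. intros. rewrite gsE_ren. rewrite (ren_as_gsE F). reflexivity. Qed.

Lemma gs_subst1 : forall sg th b r,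
  gs sg th (subst1 b r) = subst1 (gs (up_sub sg) (thL th) b) (gs sg th r).
Proof.
  intros. rewrite !subst1_gs, !(proj1 gs_gs). f_equal; fext.
  - destruct x; simpl; [reflexivity|]. unfold lift_lam.
    rewrite (proj1 gs_ren). symmetry. exact (gs_id _).
  - unfold compth, idth, thL; simpl. rewrite ecomp_Hole_r, gsE_ren. f_equal.
    symmetry. exact (gsE_id _).
Qed.

Lemma gsc_ssub_frame : forall sg th F c,
  gsc (fun n => lift_mu (sg n)) (thM th) (ssub_cmd 0 (ren_ectx (fun n => n) S F) c)
  = ssub_cmd 0 (ren_ectx (fun n => n) S (gsE sg th F)) (gsc (fun n => lift_mu (sg n)) (thM th) c).
Proof.
  intros. rewrite !(proj2 ssub_as_gs), !(proj2 gs_gs). f_equal; fext.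
  - simpl. rewrite gs_thk0_lift. reflexivity.
  - unfold compth, thk; destruct x; simpl.
    + rewrite ?ecomp_Hole_r, gsE_ren, ren_gsE. reflexivity.
    + rewrite ?ecomp_Hole_r, gsE_ren, (ren_as_gsE (snd (th x))). reflexivity.
Qed.

Definition rho0 (a : nat) : nat -> nat := fun n => match n with 0 => a | S m => m end.

Lemma gsc_muI : forall sg th a c,
  gsc Var (thbE (fst (th a)) (snd (th a))) (gsc (fun n => lift_mu (sg n)) (thM th) c)
  = gsc sg th (ren_cmd (fun n => n) (rho0 a) c).
Proof.
  intros. rewrite (proj2 gs_gs), (proj2 gs_ren). f_equal; fext.
  - rewrite gs_thbE_lift. reflexivity.
  - unfold compth, thM, thbE; destruct x; simpl.
    + rewrite ecomp_Hole_r. destruct (th a); reflexivity.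
    + rewrite gsE_ren. rewrite (gsE_id' (snd (th x))) by (intros; reflexivity). destruct (th x); reflexivity.
Qed.

Lemma muI_as_gs : forall b c, ren_cmd (fun n => n) (rho0 b) c = gsc Var (thbE b Hole) c.
Proof. intros. rewrite (proj2 ren_as_gs). f_equal; fext; destruct x; reflexivity. Qed.

Lemma thbE_ssub : forall b E1 F c,
  gsc Var (thbE b E1) (ssub_cmd 0 (ren_ectx (fun n => n) S F) c)
  = gsc Var (thbE b (ecomp E1 F)) c.
Proof.
  intros. rewrite (proj2 ssub_as_gs), (proj2 gs_gs). f_equal; fext.
  - unfold compth, thk, thbE; destruct x; simpl.
    + rewrite gsE_ren. rewrite (gsE_id' F) by (intros; reflexivity). reflexivity.
    + reflexivity.
Qed.

Lemma lam_subst : forall xi zeta sg th b u,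
  subst1 (ren_tm (up xi) zeta (gs (up_sub sg) (thL th) b)) u
  = gs (fun n => match n with 0 => u | S m => ren_tm xi zeta (sg m) end) (renth xi zeta th) b.
Proof.
  intros. rewrite subst1_gs, (proj1 ren_gs), (proj1 gs_gs). f_equal; fext.
  - destruct x; simpl; [reflexivity|]. unfold lift_lam. rewrite (proj1 ren_ren).
    rewrite (proj1 gs_ren). rewrite (proj1 ren_as_gs). reflexivity.
  - unfold compth, renth, thL, idth; simpl. rewrite ren_renE, gsE_ren.
    rewrite (ren_as_gsE _ xi zeta). reflexivity.
Qed.

Lemma mu_subst : forall xi zeta sg th b E c,
  gsc Var (thbE b E) (ren_cmd xi (up zeta) (gsc (fun n => lift_mu (sg n)) (thM th) c))
  = gsc (fun n => ren_tm xi zeta (sg n))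
        (fun a => match a with 0 => (b, E) | S m => renth xi zeta th m end) c.
Proof.
  intros. rewrite (proj2 ren_gs), (proj2 gs_gs). f_equal; fext.
  - unfold lift_mu. rewrite (proj1 ren_ren), (proj1 gs_ren), (proj1 ren_as_gs). reflexivity.
  - unfold compth, renth, thM, thbE; destruct x; simpl.
    + rewrite ecomp_Hole_r. reflexivity.
    + rewrite ren_renE, gsE_ren. rewrite (ren_as_gsE _ xi zeta). reflexivity.
Qed.


Section Gen.
Lemma t_rt : forall A R x y, clos_trans A R x y -> clos_refl_trans A R x y.
Proof. intros; apply clos_t_clos_rt; auto. Qed.
Variable A : Type.
Variable R : A -> A -> Prop.

Lemma tc_first : forall y z, clos_trans A R y z ->
  exists y1, R y y1 /\ clos_refl_trans A R y1 z.
Proof.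
  intros y z H. apply clos_trans_t1n in H. inversion H; subst.
  - exists z; split; auto. apply rt_refl.
  - exists y0; split; auto. apply t_rt. apply clos_trans_t1n_iff. auto.
Qed.

Lemma rt_tc_first : forall x y z, clos_refl_trans A R x y -> clos_trans A R y z ->
  exists x1, R x x1 /\ clos_refl_trans A R x1 z.
Proof.
  intros x y z Hxy Hyz. apply clos_rt_rt1n in Hxy. inversion Hxy; subst.
  - apply tc_first; auto.
  - exists y0; split; auto. eapply rt_trans. apply clos_rt_rt1n_iff. eauto. apply t_rt. auto.
Qed.

Lemma Acc_tc_ind (P : A -> Prop) :
  (forall x, (forall y, clos_trans A R x y -> P y) -> P x) ->
  forall x, Acc (fun a b => R b a) x -> P x.
Proof.
  intros H x Hx.
  enough (forall y, clos_refl_trans A R x y -> P y) by (apply H0; apply rt_refl).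
  induction Hx as [x _ IH]. intros y Hxy. apply H. intros z Hyz.
  destruct (rt_tc_first _ _ _ Hxy Hyz) as [x1 [Hx1 Hr]].
  apply (IH x1 Hx1 z Hr).
Qed.

Lemma Acc_step : forall x y, Acc (fun a b => R b a) x -> R x y -> Acc (fun a b => R b a) y.
Proof. intros x y H Hr. inversion H. auto. Qed.

Lemma Acc_rt : forall x y, Acc (fun a b => R b a) x -> clos_refl_trans A R x y -> Acc (fun a b => R b a) y.
Proof. intros x y H Hr. induction Hr; eauto using Acc_step. Qed.

Lemma Acc_tc : forall x y, Acc (fun a b => R b a) x -> clos_trans A R x y -> Acc (fun a b => R b a) y.
Proof. intros. eapply Acc_rt; eauto. apply t_rt; auto. Qed.

Lemma tc_rt : forall x y, clos_trans A R x y -> clos_refl_trans A R x y.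
Proof. intros; apply t_rt; auto. Qed.
End Gen.

Lemma Acc_back : forall (A B : Type) (R1 : A -> A -> Prop) (R2 : B -> B -> Prop) (f : A -> B),
  (forall x y, R1 x y -> clos_trans B R2 (f x) (f y)) ->
  forall x, Acc (fun a b => R2 b a) (f x) -> Acc (fun a b => R1 b a) x.
Proof.
  intros A B R1 R2 f Hf x H.
  remember (f x) as y. revert x Heqy. revert y H.
  apply (Acc_tc_ind B R2 (fun y => forall x, y = f x -> Acc (fun a b => R1 b a) x)).
  intros y IH x0 ->. constructor. intros z Hz. apply (IH (f z)); auto.
Qed.

Lemma tc_map : forall (A B : Type) (R1 : A -> A -> Prop) (R2 : B -> B -> Prop) (f : A -> B),
  (forall x y, R1 x y -> clos_trans B R2 (f x) (f y)) ->
  forall x y, clos_trans A R1 x y -> clos_trans B R2 (f x) (f y).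
Proof. intros. induction H0; eauto using t_trans. Qed.

Lemma rt_map : forall (A B : Type) (R1 : A -> A -> Prop) (R2 : B -> B -> Prop) (f : A -> B),
  (forall x y, R1 x y -> clos_refl_trans B R2 (f x) (f y)) ->
  forall x y, clos_refl_trans A R1 x y -> clos_refl_trans B R2 (f x) (f y).
Proof. intros. induction H0; eauto using rt_trans, rt_refl. Qed.

Lemma tc1 : forall (A B : Type) (R1 : A -> A -> Prop) (R2 : B -> B -> Prop) (f : A -> B),
  (forall x y, R1 x y -> R2 (f x) (f y)) ->
  forall x y, clos_trans A R1 x y -> clos_trans B R2 (f x) (f y).
Proof. intros. apply (tc_map A B R1 R2 f); auto. intros; apply t_step; auto. Qed.

Lemma rt1 : forall (A B : Type) (R1 : A -> A -> Prop) (R2 : B -> B -> Prop) (f : A -> B),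
  (forall x y, R1 x y -> R2 (f x) (f y)) ->
  forall x y, clos_refl_trans A R1 x y -> clos_refl_trans B R2 (f x) (f y).
Proof. intros. apply (rt_map A B R1 R2 f); auto. intros; apply rt_step; auto. Qed.

Lemma st_fill : forall E t t', st t t' -> st (fill E t) (fill E t').
Proof. induction E; simpl; intros; try constructor; auto. Qed.

Lemma st_fillE : forall E E' t, st_ectx E E' -> st (fill E t) (fill E' t).
Proof. intros E E' t H; induction H; simpl; constructor; auto. Qed.

Definition frame (F : ectx) : Prop :=
  (exists v, F = EApp Hole v) \/ F = ESuc Hole \/ (exists A r s, F = ENrec A r s Hole).

Lemma snoc_dec : forall E, E = Hole \/
  exists E1 F, E = ecomp E1 F /\ esize E1 < esize E /\ frame F.
Proof.
  induction E.
  - auto.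
  - right. destruct IHE as [->|[E1 [F [-> [Hs Hf]]]]].
    + exists Hole, (EApp Hole t). simpl. split; auto. split. lia. left; eauto.
    + exists (EApp E1 t), F. simpl. split; auto. split. lia. auto.
  - right. destruct IHE as [->|[E1 [F [-> [Hs Hf]]]]].
    + exists Hole, (ESuc Hole). simpl. split; auto. split. lia. right; left; auto.
    + exists (ESuc E1), F. simpl. split; auto. split. lia. auto.
  - right. destruct IHE as [->|[E1 [F [-> [Hs Hf]]]]].
    + exists Hole, (ENrec t t0 t1 Hole). simpl. split; auto. split. lia. right; right; eauto.
    + exists (ENrec t t0 t1 E1), F. simpl. split; auto. split. lia. auto.
Qed.

Lemma frame_step : forall F A X, frame F -> exists A',
  st (fill F (Mu A X)) (Mu A' (ssub_cmd 0 (ren_ectx (fun n => n) S F) X)).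
Proof.
  intros F A X [[v ->]|[->|[A0 [r [s ->]]]]]; simpl.
  - exists A. apply (S_muR A A X v).
  - exists A. apply S_muS.
  - exists A0. apply S_muN.
Qed.

Lemma spine2 : forall n E X A b, esize E <= n ->
  clos_trans cmd st_cmd (Pass b (fill E (Mu A X))) (gsc Var (thbE b E) X).
Proof.
  induction n; intros E X A b Hs; destruct (snoc_dec E) as [->|[E1 [F [-> [Hlt Hf]]]]];
    try (simpl; apply t_step; rewrite <- muI_as_gs; apply S_muI); try lia.
  destruct (frame_step F A X Hf) as [A' Hst].
  eapply t_trans.
  - apply t_step. rewrite fill_ecomp. apply SC_Pass. apply st_fill. exact Hst.
  - rewrite <- thbE_ssub. apply IHn. lia.
Qed.

Lemma gs_lift_mu : forall sg th t,
  gs (fun n => lift_mu (sg n)) (thM th) (lift_mu t) = lift_mu (gs sg th t).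
Proof. intros. unfold lift_mu at 2 3. rewrite (proj1 gs_ren), (proj1 ren_gs). reflexivity. Qed.

Lemma compat :
  (forall t t', st t t' -> forall sg th, clos_trans tm st (gs sg th t) (gs sg th t')) /\
  (forall c c', st_cmd c c' -> forall sg th, clos_trans cmd st_cmd (gsc sg th c) (gsc sg th c')).
Proof.
  apply st_both; intros; simpl.
  - apply t_step. rewrite gs_subst1. apply S_beta.
  - apply t_step. pose proof (gsc_ssub_frame sg th (ESuc Hole) c) as HH; simpl in HH. unfold lift_mu in HH |- *.
    rewrite HH. apply S_muS.
  - apply t_step. pose proof (gsc_ssub_frame sg th (EApp Hole s) c) as HH; simpl in HH. unfold lift_mu in HH |- *.
    rewrite HH. apply S_muR.
  - apply t_step. rewrite gs_lift_mu. apply S_muEta.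
  - apply t_step. apply S_rec0.
  - apply t_step. rewrite gs_numeral. apply S_recS.
  - apply t_step. pose proof (gsc_ssub_frame sg th (ENrec A r s Hole) c) as HH; simpl in HH. unfold lift_mu in HH |- *.
    rewrite HH. apply S_muN.
  - apply (tc1 _ _ st st (Lam A)); auto. intros; constructor; auto.
  - apply (tc1 _ _ st st (fun x => App x (gs sg th s))); auto. intros; constructor; auto.
  - apply (tc1 _ _ st st (fun x => App (gs sg th t) x)); auto. intros; constructor; auto.
  - apply (tc1 _ _ st_cmd st (Mu A)); auto. intros; constructor; auto.
  - apply (tc1 _ _ st st Suc); auto. intros; constructor; auto.
  - apply (tc1 _ _ st st (fun x => Nrec A x (gs sg th s) (gs sg th t))); auto. intros; constructor; auto.
  - apply (tc1 _ _ st st (fun x => Nrec A (gs sg th r) x (gs sg th t))); auto. intros; constructor; auto.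
  - apply (tc1 _ _ st st (fun x => Nrec A (gs sg th r) (gs sg th s) x)); auto. intros; constructor; auto.
  - change (fun n : nat => match n with 0 => a | S m => m end) with (rho0 a).
    rewrite <- (gsc_muI sg th a c). apply spine2 with (n := esize (snd (th a))). auto.
  - apply (tc1 _ _ st st_cmd (fun x => Pass (fst (th a)) (fill (snd (th a)) x))); auto.
    intros; constructor; apply st_fill; auto.
Qed.

Lemma compat_ren : forall xi zeta t t', st t t' ->
  clos_trans tm st (ren_tm xi zeta t) (ren_tm xi zeta t').
Proof. intros. rewrite !(proj1 ren_as_gs). apply compat; auto. Qed.

Lemma compat_renc : forall xi zeta c c', st_cmd c c' ->
  clos_trans cmd st_cmd (ren_cmd xi zeta c) (ren_cmd xi zeta c').
Proof. intros. rewrite !(proj2 ren_as_gs). apply compat; auto. Qed.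

Lemma compat_subst1 : forall b b' r, st b b' -> clos_trans tm st (subst1 b r) (subst1 b' r).
Proof. intros. rewrite !subst1_gs. apply compat; auto. Qed.

Lemma SN_back : forall f, (forall x y, st x y -> clos_trans tm st (f x) (f y)) ->
  forall x, SN (f x) -> SN x.
Proof. intros. eapply Acc_back; eauto. Qed.

Lemma SN_fill_inv : forall E t, SN (fill E t) -> SN t.
Proof. intros. apply (SN_back (fill E)); auto. intros; apply t_step; apply st_fill; auto. Qed.

Lemma SNE_fill_inv : forall E t, SN (fill E t) -> SNE E.
Proof. intros. apply (Acc_back _ _ st_ectx st (fun E => fill E t)); auto.
  intros; apply t_step; apply st_fillE; auto. Qed.

Lemma SNc_Pass_inv : forall b t, SNc (Pass b t) -> SN t.
Proof. intros. apply (Acc_back _ _ st st_cmd (Pass b)); auto.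
  intros; apply t_step; constructor; auto. Qed.

Lemma SN_ren_inv : forall xi zeta t, SN (ren_tm xi zeta t) -> SN t.
Proof. intros. apply (SN_back (ren_tm xi zeta)); auto. intros; apply compat_ren; auto. Qed.

Lemma SN_gs_inv : forall sg th t, SN (gs sg th t) -> SN t.
Proof. intros. apply (SN_back (gs sg th)); auto. intros; apply compat; auto. Qed.


Definition neutral (h : tm) : Prop :=
  match h with Lam _ _ | Mu _ _ | Zero | Suc _ => False | _ => True end.

Lemma fill_Lam : forall E h A b, fill E h = Lam A b -> E = Hole /\ h = Lam A b.
Proof. destruct E; simpl; intros; try discriminate; auto. Qed.
Lemma fill_Mu : forall E h A c, fill E h = Mu A c -> E = Hole /\ h = Mu A c.
Proof. destruct E; simpl; intros; try discriminate; auto. Qed.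
Lemma fill_num : forall E h n, fill E h = numeral n -> exists m, h = numeral m.
Proof.
  induction E; simpl; intros h n H.
  - eauto.
  - destruct n; discriminate.
  - destruct n; [discriminate|]. simpl in H. inversion H. eauto.
  - destruct n; discriminate.
Qed.
Lemma numeral_nf : forall n t, st (numeral n) t -> False.
Proof. induction n; simpl; intros t H; inversion H; subst; eauto; destruct n; discriminate. Qed.

Lemma neutral_num : forall m, neutral (numeral m) -> False.
Proof. destruct m; simpl; auto. Qed.

Lemma cmd_dec : forall b u c', st_cmd (Pass b u) c' ->
  (exists u', st u u' /\ c' = Pass b u') \/
  (exists A c, u = Mu A c /\ c' = ren_cmd (fun n => n) (rho0 b) c).
Proof. intros. inversion H; subst; eauto. Qed.

Ltac fill_contra :=
  match goal with
  | H : fill _ _ = Lam _ _ |- _ => apply fill_Lam in H; destruct H; subst; simpl in *; try contradiction; try discriminate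
  | H : Lam _ _ = fill _ _ |- _ => symmetry in H; fill_contra
  | H : fill _ _ = Mu _ _ |- _ => apply fill_Mu in H; destruct H; subst; simpl in *; try contradiction; try discriminate
  | H : Mu _ _ = fill _ _ |- _ => symmetry in H; fill_contra
  | H : fill _ _ = Zero |- _ => let m := fresh "m" in let Hm := fresh "Hm" in
      apply (fill_num _ _ 0) in H; destruct H as [m Hm];
      first [ (subst; exfalso; eapply neutral_num; eassumption) | (destruct m; discriminate) ]
  | H : Zero = fill _ _ |- _ => symmetry in H; fill_contra
  | H : fill _ _ = Suc (numeral ?n) |- _ => let m := fresh "m" in let Hm := fresh "Hm" in
      apply (fill_num _ _ (S n)) in H; destruct H as [m Hm];
      first [ (subst; exfalso; eapply neutral_num; eassumption) | (destruct m; discriminate) ]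
  | H : Suc (numeral _) = fill _ _ |- _ => symmetry in H; fill_contra
  end.

Lemma DN : forall E h t', neutral h -> st (fill E h) t' ->
  (exists h', st h h' /\ t' = fill E h') \/ (exists E', st_ectx E E' /\ t' = fill E' h).
Proof.
  induction E; simpl; intros h t' Hn H.
  - left; eauto.
  - remember (fill E h) as u. inversion H; subst; try fill_contra.
    + destruct (IHE h t'0 Hn H3) as [[h' [Hh ->]]|[E' [HE ->]]].
      * left; eauto.
      * right; exists (EApp E' t); split; auto. constructor; auto.
    + right; exists (EApp E s'); split; auto. constructor; auto.
  - remember (fill E h) as u. inversion H; subst; try fill_contra.
    + destruct (IHE h t'0 Hn H1) as [[h' [Hh ->]]|[E' [HE ->]]].
      * left; eauto.
      * right; exists (ESuc E'); split; auto. constructor; auto.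
  - remember (fill E h) as u. inversion H; subst; try fill_contra.
    + right; eexists; split; [apply SE_NrecR; eauto|]; auto.
    + right; eexists; split; [apply SE_NrecS; eauto|]; auto.
    + destruct (IHE h t'0 Hn H5) as [[h' [Hh ->]]|[E' [HE ->]]].
      * left; eauto.
      * right; exists (ENrec t t0 t1 E'); split; auto. constructor; auto.
Qed.

Lemma DM : forall E A c t', st (fill E (Mu A c)) t' ->
  (exists h', st (Mu A c) h' /\ t' = fill E h') \/
  (exists E', st_ectx E E' /\ t' = fill E' (Mu A c)) \/
  (exists E1 F B, E = ecomp E1 F /\ esize E1 < esize E /\
     t' = fill E1 (Mu B (ssub_cmd 0 (ren_ectx (fun n => n) S F) c))).
Proof.
  induction E; simpl; intros A c t' H.
  - left; eauto.
  - remember (fill E (Mu A c)) as u. inversion H; subst; repeat match goal with HH : ?x = fill ?E ?h |- _ => symmetry in HH end.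
    + apply fill_Lam in H1. destruct H1; subst; discriminate.
    + apply fill_Mu in H1. destruct H1 as [-> HH]. inversion HH; subst.
      right; right. exists Hole, (EApp Hole t), B. simpl. repeat split; auto.
    + destruct (IHE A c t'0 H3) as [[h' [Hh ->]]|[[E' [HE ->]]|[E1 [F [B [-> [Hs ->]]]]]]].
      * left; eauto.
      * right; left; exists (EApp E' t); split; auto. constructor; auto.
      * right; right; exists (EApp E1 t), F, B. simpl. repeat split; auto. lia.
    + right; left; exists (EApp E s'); split; auto. constructor; auto.
  - remember (fill E (Mu A c)) as u. inversion H; subst; repeat match goal with HH : ?x = fill ?E ?h |- _ => symmetry in HH end.
    + apply fill_Mu in H1. destruct H1 as [-> HH]. inversion HH; subst.
      right; right. exists Hole, (ESuc Hole); eexists. simpl. repeat split; auto.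
    + destruct (IHE A c t'0 H1) as [[h' [Hh ->]]|[[E' [HE ->]]|[E1 [F [B [-> [Hs ->]]]]]]].
      * left; eauto.
      * right; left; exists (ESuc E'); split; auto. constructor; auto.
      * right; right; exists (ESuc E1), F, B. simpl. repeat split; auto. lia.
  - remember (fill E (Mu A c)) as u. inversion H; subst; repeat match goal with HH : ?x = fill ?E ?h |- _ => symmetry in HH end.
    + apply (fill_num _ _ 0) in H4. destruct H4 as [m Hm]; destruct m; discriminate.
    + apply (fill_num _ _ (S n)) in H4. destruct H4 as [m Hm]; destruct m; discriminate.
    + apply fill_Mu in H4. destruct H4 as [-> HH]. inversion HH; subst.
      right; right. exists Hole, (ENrec t t0 t1 Hole), t. simpl. repeat split; auto.
    + right; left; eexists; split; [apply SE_NrecR; eauto|]; auto.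
    + right; left; eexists; split; [apply SE_NrecS; eauto|]; auto.
    + destruct (IHE A c t'0 H5) as [[h' [Hh ->]]|[[E' [HE ->]]|[E1 [F [B [-> [Hs ->]]]]]]].
      * left; eauto.
      * right; left; exists (ENrec t t0 t1 E'); split; auto. constructor; auto.
      * right; right; exists (ENrec t t0 t1 E1), F, B. simpl. repeat split; auto. lia.
Qed.


Lemma ren_st_ectx : forall xi zeta E E', st_ectx E E' ->
  clos_trans ectx st_ectx (ren_ectx xi zeta E) (ren_ectx xi zeta E').
Proof.
  intros xi zeta E E' H; induction H; simpl.
  - apply (tc1 _ _ st_ectx st_ectx (fun x => EApp x (ren_tm xi zeta t))); auto. intros; constructor; auto.
  - apply (tc1 _ _ st st_ectx (fun x => EApp (ren_ectx xi zeta E) x)); [intros; constructor; auto|]. apply compat_ren; auto.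
  - apply (tc1 _ _ st_ectx st_ectx ESuc); auto. intros; constructor; auto.
  - apply (tc1 _ _ st st_ectx (fun x => ENrec A x _ _)); [intros; constructor; auto|]. apply compat_ren; auto.
  - apply (tc1 _ _ st st_ectx (fun x => ENrec A _ x _)); [intros; constructor; auto|]. apply compat_ren; auto.
  - apply (tc1 _ _ st_ectx st_ectx (fun x => ENrec A _ _ x)); auto. intros; constructor; auto.
Qed.

Lemma ren_rt_ectx : forall xi zeta E E', clos_refl_trans ectx st_ectx E E' ->
  clos_refl_trans ectx st_ectx (ren_ectx xi zeta E) (ren_ectx xi zeta E').
Proof. intros. apply (rt_map _ _ st_ectx st_ectx (ren_ectx xi zeta)); auto.
  intros. apply t_rt. apply ren_st_ectx; auto. Qed.

Lemma rt_fill2 : forall E E' t t', clos_refl_trans ectx st_ectx E E' -> clos_refl_trans tm st t t' ->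
  clos_refl_trans tm st (fill E t) (fill E' t').
Proof.
  intros. eapply rt_trans.
  - apply (rt1 _ _ st_ectx st (fun x => fill x t)); eauto. intros; apply st_fillE; auto.
  - apply (rt1 _ _ st st (fill E')); eauto. intros; apply st_fill; auto.
Qed.

Ltac rtc f := apply (rt1 _ _ st st f); [intros; constructor; auto|]; auto.

Lemma rt_app : forall a a' b b', clos_refl_trans tm st a a' -> clos_refl_trans tm st b b' ->
  clos_refl_trans tm st (App a b) (App a' b').
Proof. intros. apply rt_trans with (App a' b). rtc (fun x => App x b). rtc (fun x => App a' x). Qed.

Lemma rt_nrec : forall A a a' b b' c c', clos_refl_trans tm st a a' -> clos_refl_trans tm st b b' ->
  clos_refl_trans tm st c c' -> clos_refl_trans tm st (Nrec A a b c) (Nrec A a' b' c').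
Proof. intros. apply rt_trans with (Nrec A a' b c). rtc (fun x => Nrec A x b c).
  apply rt_trans with (Nrec A a' b' c).
  rtc (fun x => Nrec A a' x c). rtc (fun x => Nrec A a' b' x). Qed.

Lemma rt_gs :
  (forall t sg th th', (forall a, fst (th a) = fst (th' a) /\
     clos_refl_trans ectx st_ectx (snd (th a)) (snd (th' a))) ->
     clos_refl_trans tm st (gs sg th t) (gs sg th' t)) /\
  (forall c sg th th', (forall a, fst (th a) = fst (th' a) /\
     clos_refl_trans ectx st_ectx (snd (th a)) (snd (th' a))) ->
     clos_refl_trans cmd st_cmd (gsc sg th c) (gsc sg th' c)).
Proof.
  apply tm_cmd_mut; intros; simpl.
  - apply rt_refl.
  - rtc (Lam t). apply H. intros a; unfold thL; simpl. destruct (H0 a); split; auto.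
    apply ren_rt_ectx; auto.
  - apply rt_app; auto.
  - apply (rt1 _ _ st_cmd st (Mu t)); [intros; constructor; auto|]. apply H.
    intros [|a]; simpl; [split; auto; apply rt_refl|]. destruct (H0 a); split; auto.
    apply ren_rt_ectx; auto.
  - apply rt_refl.
  - rtc Suc.
  - apply rt_nrec; auto.
  - destruct (H0 n) as [Hf Hs]. rewrite Hf.
    apply (rt1 _ _ st st_cmd (Pass (fst (th' n)))); [intros; constructor; auto|].
    apply rt_fill2; auto.
Qed.

Lemma rt_thbE : forall b E E' c, st_ectx E E' ->
  clos_refl_trans cmd st_cmd (gsc Var (thbE b E) c) (gsc Var (thbE b E') c).
Proof. intros. apply rt_gs. intros [|a]; simpl; split; auto; try apply rt_refl.
  apply rt_step; auto. Qed.

Lemma esize_st : forall E E', st_ectx E E' -> esize E' = esize E.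
Proof. intros E E' H; induction H; simpl; auto. Qed.

Lemma st_ectx_ecomp : forall E E' F, st_ectx E E' -> st_ectx (ecomp E F) (ecomp E' F).
Proof. intros E E' F H; induction H; simpl; constructor; auto. Qed.

Lemma SNE_ecomp_l : forall E F, SNE (ecomp E F) -> SNE E.
Proof. intros. apply (Acc_back _ _ st_ectx st_ectx (fun E => ecomp E F)); auto.
  intros; apply t_step; apply st_ectx_ecomp; auto. Qed.

Lemma rt_eq_or_tc : forall (A : Type) R (x y : A), clos_refl_trans A R x y -> x = y \/ clos_trans A R x y.
Proof. intros. apply clos_rt_rtn1 in H. destruct H; auto. right.
  eapply clos_rt_t. apply clos_rtn1_rt. eauto. apply t_step; auto. Qed.


Definition stuck h := SN h /\ forall h', clos_refl_trans tm st h h' -> neutral h'.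

Lemma L_stuck : forall b x, SNc x -> forall E, x = Pass b (fill E Zero) ->
  forall h, stuck h -> SNc (Pass b (fill E h)).
Proof.
  intros b x Hx. induction Hx as [x _ IHx]. intros E -> h [Hh Hn].
  induction Hh as [h Hh IHh].
  constructor. intros c' Hc'.
  destruct (cmd_dec _ _ _ Hc') as [[u' [Hu ->]]|[A [c [Heq ->]]]].
  - destruct (DN E h u' (Hn h (rt_refl _ _ _)) Hu) as [[h' [Hh' ->]]|[E' [HE ->]]].
    + apply IHh; auto. intros; apply Hn. eapply rt_trans; [apply rt_step; eauto| auto].
    + apply (IHx (Pass b (fill E' Zero))). constructor; apply st_fillE; auto. reflexivity.
      split; auto. constructor; exact Hh.
  - apply fill_Mu in Heq. destruct Heq; subst. exfalso. apply (Hn (Mu A c)); apply rt_refl.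
Qed.

Lemma L_beta : forall u, SN u -> forall b E A B,
  (forall u', clos_refl_trans tm st u u' -> SNc (Pass b (fill E (subst1 B u')))) ->
  SNc (Pass b (fill E (App (Lam A B) u))).
Proof.
  intros u Hu. induction Hu as [u Hu IHu]. intros b E A B Hyp.
  assert (H0 := Hyp u (rt_refl _ _ _)).
  remember (Pass b (fill E (subst1 B u))) as x. revert E B Hyp Heqx. revert x H0.
  apply (Acc_tc_ind cmd st_cmd (fun x => forall E B,
    (forall u', clos_refl_trans tm st u u' -> SNc (Pass b (fill E (subst1 B u')))) ->
    x = Pass b (fill E (subst1 B u)) -> SNc (Pass b (fill E (App (Lam A B) u))))).
  intros x IHx E B Hyp ->.
  constructor; intros c' Hc'.
  destruct (cmd_dec _ _ _ Hc') as [[t' [Ht ->]]|[A0 [c [Heq ->]]]].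
  2: { apply fill_Mu in Heq; destruct Heq; discriminate. }
  destruct (DN E (App (Lam A B) u) t' I Ht) as [[h' [Hh ->]]|[E' [HE ->]]].
  - inversion Hh; subst.
    + apply Hyp; apply rt_refl.
    + match goal with H : st (Lam _ _) _ |- _ => inversion H; subst end. apply (IHx (Pass b (fill E (subst1 b' u)))).
      * apply (tc1 _ _ st st_cmd (fun x => Pass b (fill E x))); [intros; constructor; apply st_fill; auto|].
        apply compat_subst1; auto.
      * intros u' Hu'. eapply Acc_tc. apply Hyp; eauto.
        apply (tc1 _ _ st st_cmd (fun x => Pass b (fill E x))); [intros; constructor; apply st_fill; auto|].
        apply compat_subst1; auto.
      * reflexivity.
    + apply IHu; auto. intros u'' Hu''. apply Hyp. eapply rt_trans; [apply rt_step; eauto|auto].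
  - apply (IHx (Pass b (fill E' (subst1 B u)))).
    + apply t_step; constructor; apply st_fillE; auto.
    + intros u' Hu'. apply (Acc_step _ _ (Pass b (fill E (subst1 B u')))). apply Hyp; auto. constructor; apply st_fillE; auto.
    + reflexivity.
Qed.

Lemma L_rec0 : forall b A s, SN s -> forall x, SNc x -> forall E r, x = Pass b (fill E r) ->
  SNc (Pass b (fill E (Nrec A r s Zero))).
Proof.
  intros b A s Hs. induction Hs as [s Hs IHs]. intros x Hx. induction Hx as [x Hx IHx].
  intros E r ->.
  constructor; intros c' Hc'.
  destruct (cmd_dec _ _ _ Hc') as [[t' [Ht ->]]|[A0 [c [Heq ->]]]].
  2: { apply fill_Mu in Heq; destruct Heq; discriminate. }
  destruct (DN E (Nrec A r s Zero) t' I Ht) as [[h' [Hh ->]]|[E' [HE ->]]].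
  - inversion Hh; subst.
    + constructor; exact Hx.
    + apply (IHx (Pass b (fill E r'))); [constructor; apply st_fill; auto | reflexivity].
    + apply (IHs s') with (x := Pass b (fill E r)); auto. constructor; exact Hx.
    + inversion H4.
  - apply (IHx (Pass b (fill E' r))); [constructor; apply st_fillE; auto | reflexivity].
Qed.

Lemma numeral_inj : forall n m, numeral n = numeral m -> n = m.
Proof. induction n; destruct m; simpl; intros; try discriminate; auto. inversion H; auto. Qed.

Lemma L_recS : forall b A n x, SNc x -> forall E r s,
  x = Pass b (fill E (App (App s (numeral n)) (Nrec A r s (numeral n)))) ->
  SNc (Pass b (fill E (Nrec A r s (Suc (numeral n))))).
Proof.
  intros b A n x Hx.
  enough (SNc x -> forall E r s,
    x = Pass b (fill E (App (App s (numeral n)) (Nrec A r s (numeral n)))) ->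
    SNc (Pass b (fill E (Nrec A r s (Suc (numeral n)))))) by auto.
  revert x Hx.
  apply (Acc_tc_ind cmd st_cmd (fun x => SNc x -> forall E r s,
    x = Pass b (fill E (App (App s (numeral n)) (Nrec A r s (numeral n)))) ->
    SNc (Pass b (fill E (Nrec A r s (Suc (numeral n))))))).
  intros x IHx Hx E r s ->.
  constructor; intros c' Hc'.
  destruct (cmd_dec _ _ _ Hc') as [[t' [Ht ->]]|[A0 [c [Heq ->]]]].
  2: { apply fill_Mu in Heq; destruct Heq; discriminate. }
  destruct (DN E (Nrec A r s (Suc (numeral n))) t' I Ht) as [[h' [Hh ->]]|[E' [HE ->]]].
  - inversion Hh; subst.
    + match goal with H : numeral _ = numeral _ |- _ => apply numeral_inj in H; subst end. exact Hx.
    + assert (Hs : clos_trans cmd st_cmd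
        (Pass b (fill E (App (App s (numeral n)) (Nrec A r s (numeral n)))))
        (Pass b (fill E (App (App s (numeral n)) (Nrec A r' s (numeral n)))))).
      { apply t_step; constructor; apply st_fill. apply SC_AppR. apply SC_NrecR. auto. }
      apply (IHx _ Hs); [eapply Acc_tc; eauto | reflexivity].
    + assert (Hs : clos_trans cmd st_cmd
        (Pass b (fill E (App (App s (numeral n)) (Nrec A r s (numeral n)))))
        (Pass b (fill E (App (App s' (numeral n)) (Nrec A r s' (numeral n)))))).
      { eapply t_trans; apply t_step; constructor; apply st_fill.
        apply SC_AppL. apply SC_AppL. eauto. apply SC_AppR. apply SC_NrecS. auto. }
      apply (IHx _ Hs); [eapply Acc_tc; eauto | reflexivity].
    + exfalso. match goal with H : st (Suc (numeral n)) ?t |- _ => apply (numeral_nf (S n) t); exact H end.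
  - assert (Hs : clos_trans cmd st_cmd
        (Pass b (fill E (App (App s (numeral n)) (Nrec A r s (numeral n)))))
        (Pass b (fill E' (App (App s (numeral n)) (Nrec A r s (numeral n)))))).
    { apply t_step; constructor; apply st_fillE; auto. }
    apply (IHx _ Hs); [eapply Acc_tc; eauto | reflexivity].
Qed.

Lemma mu_lemma : forall x, SNc x -> forall b E c A, SNE E ->
  x = gsc Var (thbE b E) c -> SNc (Pass b (fill E (Mu A c))).
Proof.
  intros x Hx.
  enough (SNc x -> forall b E c A, SNE E ->
    x = gsc Var (thbE b E) c -> SNc (Pass b (fill E (Mu A c)))) by auto.
  revert x Hx.
  apply (Acc_tc_ind cmd st_cmd (fun x => SNc x -> forall b E c A, SNE E ->
    x = gsc Var (thbE b E) c -> SNc (Pass b (fill E (Mu A c))))).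
  intros x IHx Hx b E.
  remember (esize E) as m. revert E Heqm. induction m as [m IHm] using lt_wf_ind.
  intros E Hm c A HE. revert Hm c A. induction HE as [E HEacc IHE]. intros Hm c A Hxeq.
  constructor; intros c' Hc'.
  destruct (cmd_dec _ _ _ Hc') as [[t' [Ht ->]]|[A0 [c0 [Heq ->]]]].
  2: { apply fill_Mu in Heq; destruct Heq as [-> HH]. inversion HH; subst.
       rewrite muI_as_gs. exact Hx. }
  destruct (DM E A c t' Ht) as [[h' [Hh ->]]|[[E' [HE ->]]|[E1 [F [B [-> [Hs ->]]]]]]].
  - inversion Hh; subst.
    + simpl in Hx. rewrite gs_thbE_lift in Hx. exact Hx.
    + match goal with H : st_cmd c ?c2 |- _ => rename H into Hcc; rename c2 into cc end.
      apply (IHx (gsc Var (thbE b E) cc)).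
      * apply compat; auto.
      * eapply Acc_tc; eauto. apply compat; auto.
      * constructor; exact HEacc.
      * reflexivity.
  - destruct (rt_eq_or_tc _ _ _ _ (rt_thbE b E E' c HE)) as [Heq|Htc].
    + apply IHE; auto. rewrite (esize_st _ _ HE); auto. rewrite Hxeq; exact Heq.
    + rewrite <- Hxeq in Htc. apply (IHx _ Htc). eapply Acc_tc; eauto.
      apply (Acc_step _ _ E). constructor; exact HEacc. auto. reflexivity.
  - apply (IHm (esize E1)); auto.
    + subst; auto.
    + apply (SNE_ecomp_l E1 F). constructor; exact HEacc.
    + rewrite thbE_ssub. auto.
Qed.


Fixpoint Kt (A : ty) (p : nat * ectx) : Prop :=
  match A with
  | TNat => forall xi zeta n,
      SNc (Pass (zeta (fst p)) (fill (ren_ectx xi zeta (snd p)) (numeral n)))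
  | Arr A1 B => exists E' u, snd p = ecomp E' (EApp Hole u) /\
       (forall xi zeta q, Kt A1 q -> SNc (Pass (fst q) (fill (snd q) (ren_tm xi zeta u)))) /\
       Kt B (fst p, E')
  end.

Definition Rt A t := forall xi zeta q, Kt A q -> SNc (Pass (fst q) (fill (snd q) (ren_tm xi zeta t))).

Lemma Rt_ren : forall A t xi zeta, Rt A t -> Rt A (ren_tm xi zeta t).
Proof. unfold Rt; intros. rewrite (proj1 ren_ren). apply H; auto. Qed.

Lemma Kt_ren : forall A p xi zeta, Kt A p -> Kt A (zeta (fst p), ren_ectx xi zeta (snd p)).
Proof.
  induction A; simpl; intros p xi zeta H.
  - intros xi' zeta' n. rewrite ren_renE. exact (H (fun n => xi' (xi n)) (fun n => zeta' (zeta n)) n).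
  - destruct H as [E' [u [Heq [Hu HB]]]]. exists (ren_ectx xi zeta E'), (ren_tm xi zeta u).
    split; [rewrite Heq, ren_ecomp; reflexivity|]. split.
    + intros. rewrite (proj1 ren_ren). apply Hu; auto.
    + apply (IHA2 (fst p, E')). auto.
Qed.

Lemma Rt_st : forall A t t', Rt A t -> st t t' -> Rt A t'.
Proof.
  unfold Rt; intros. eapply Acc_tc. apply (H xi zeta q H1).
  apply (tc1 _ _ st st_cmd (fun x => Pass (fst q) (fill (snd q) x))).
  intros; constructor; apply st_fill; auto. apply compat_ren; auto.
Qed.

Lemma Rt_rt : forall A t t', Rt A t -> clos_refl_trans tm st t t' -> Rt A t'.
Proof. intros. induction H0; eauto using Rt_st. Qed.

Fixpoint ctx0 (A : ty) : ectx :=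
  match A with
  | TNat => Hole
  | Arr A1 B => ecomp (ctx0 B) (EApp Hole (Var 0))
  end.

Lemma SNc_num : forall b n, SNc (Pass b (numeral n)).
Proof.
  intros. constructor. intros c' Hc'.
  destruct (cmd_dec _ _ _ Hc') as [[t' [Ht ->]]|[A0 [c [Heq ->]]]].
  - exfalso; eapply numeral_nf; eauto.
  - destruct n; discriminate.
Qed.

Lemma var_rt : forall n y, clos_refl_trans tm st (Var n) y -> y = Var n.
Proof.
  intros n y H. apply clos_rt_rt1n in H. inversion H; subst; auto.
  match goal with H : st (Var _) _ |- _ => inversion H end.
Qed.

Lemma stuck_var : forall n, stuck (Var n).
Proof.
  intros. split.
  - constructor; intros y H; inversion H.
  - intros h' H. apply var_rt in H. subst. simpl. auto.
Qed.

Lemma app_rt : forall x y, clos_refl_trans_1n tm st x y -> forall h u, x = App h u ->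
  (forall h', clos_refl_trans tm st h h' -> neutral h') ->
  exists h' u', y = App h' u' /\ clos_refl_trans tm st h h'.
Proof.
  intros x y H. induction H; intros h u -> Hn.
  - exists h, u; split; auto. apply rt_refl.
  - inversion H; subst.
    + exfalso; apply (Hn (Lam A b)); apply rt_refl.
    + exfalso; apply (Hn (Mu A c)); apply rt_refl.
    + destruct (IHclos_refl_trans_1n t' u eq_refl) as [h' [u' [-> Hr]]].
      * intros; apply Hn. eapply rt_trans; [apply rt_step; eauto|auto].
      * exists h', u'; split; auto. eapply rt_trans; [apply rt_step; eauto|auto].
    + destruct (IHclos_refl_trans_1n h s' eq_refl Hn) as [h' [u' [-> Hr]]].
      exists h', u'; split; auto.
Qed.

Lemma stuck_app : forall h u, stuck h -> SN u -> stuck (App h u).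
Proof.
  intros h u [Hh Hn] Hu. split.
  - revert u Hu Hn. induction Hh as [h Hh IHh]. intros u Hu Hn. induction Hu as [u Hu IHu].
    constructor; intros y Hy. inversion Hy; subst.
    + exfalso; apply (Hn (Lam A b)); apply rt_refl.
    + exfalso; apply (Hn (Mu A c)); apply rt_refl.
    + apply IHh; auto. constructor; exact Hu. intros; apply Hn. eapply rt_trans; [apply rt_step; eauto|auto].
    + apply IHu; auto.
  - intros y Hy. apply clos_rt_rt1n in Hy.
    destruct (app_rt _ _ Hy h u eq_refl Hn) as [h' [u' [-> _]]]. simpl; auto.
Qed.

Lemma CR : forall A, (forall b, Kt A (b, ctx0 A)) /\ (forall t, Rt A t -> SN t) /\
  (forall p, Kt A p -> forall h, stuck h -> SNc (Pass (fst p) (fill (snd p) h))).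
Proof.
  induction A.
  - assert (H1 : forall b, Kt TNat (b, ctx0 TNat)).
    { simpl; intros. apply SNc_num. }
    split; [auto|split].
    + intros t Ht. specialize (Ht (fun n => n) (fun n => n) (0, Hole) (H1 0)).
      simpl in Ht. apply SNc_Pass_inv in Ht. rewrite (proj1 ren_id) in Ht. auto.
    + intros [b E] Hp h Hh. simpl in Hp. specialize (Hp (fun n => n) (fun n => n) 0).
      rewrite ren_idE in Hp. simpl in *. eapply L_stuck; eauto.
  - destruct IHA1 as [I1 [S1 N1]]. destruct IHA2 as [I2 [S2 N2]].
    assert (HI : forall b, Kt (Arr A1 A2) (b, ctx0 (Arr A1 A2))).
    { intros b. simpl. exists (ctx0 A2), (Var 0). split; auto. split; auto.
      intros. simpl. apply N1; auto. apply stuck_var. }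
    split; [auto|split].
    + intros t Ht. specialize (Ht (fun n => n) (fun n => n) _ (HI 0)).
      apply SNc_Pass_inv in Ht. apply SN_fill_inv in Ht. rewrite (proj1 ren_id) in Ht. auto.
    + intros [b E] [E' [u [Heq [Hu HB]]]] h Hh. simpl in *. subst E.
      rewrite fill_ecomp. simpl. apply (N2 (b, E')); auto.
      apply stuck_app; auto.
Qed.


Lemma NrecNum : forall n A b E r s, Kt A (b, E) -> Rt A r -> Rt (Arr TNat (Arr A A)) s ->
  SNc (Pass b (fill E (Nrec A r s (numeral n)))).
Proof.
  induction n; intros A b E r s HE Hr Hs.
  - simpl. apply (L_rec0 b A s) with (x := Pass b (fill E r)); auto.
    + apply (proj1 (proj2 (CR (Arr TNat (Arr A A))))). exact Hs.
    + specialize (Hr (fun n => n) (fun n => n) (b, E) HE). simpl in Hr.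
      rewrite (proj1 ren_id) in Hr. exact Hr.
  - simpl. apply (L_recS b A n) with
      (x := Pass b (fill E (App (App s (numeral n)) (Nrec A r s (numeral n))))); auto.
    set (v := Nrec A r s (numeral n)).
    assert (HK : Kt (Arr TNat (Arr A A)) (b, ecomp (ecomp E (EApp Hole v)) (EApp Hole (numeral n)))).
    { simpl. exists (ecomp E (EApp Hole v)), (numeral n). split; auto. split.
      - intros xi zeta [b' E''] Hq. rewrite ren_numeral. simpl in Hq |- *.
        specialize (Hq (fun n => n) (fun n => n) n). rewrite ren_idE in Hq. exact Hq.
      - exists E, v. split; auto. split; auto.
        intros xi zeta [b' E''] Hq. unfold v. simpl. rewrite ren_numeral.
        apply IHn; auto; apply Rt_ren; auto. }
    specialize (Hs (fun n => n) (fun n => n) _ HK). simpl in Hs.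
    rewrite (proj1 ren_id), !fill_ecomp in Hs. simpl in Hs. exact Hs.
Qed.

Scheme has_type_mut := Induction for has_type Sort Prop
with cmd_ok_mut := Induction for cmd_ok Sort Prop.

Definition EnvOK G D (sg : nat -> tm) (th : nat -> nat * ectx) :=
  (forall x A, nth_error G x = Some A -> Rt A (sg x)) /\
  (forall a A, nth_error D a = Some A -> Kt A (th a)).

Lemma fund : forall G D t A, has_type G D t A ->
  forall sg th, EnvOK G D sg th -> Rt A (gs sg th t).
Proof.
  apply (has_type_mut (fun G D t A _ => forall sg th, EnvOK G D sg th -> Rt A (gs sg th t))
                      (fun G D c _ => forall sg th, EnvOK G D sg th -> SNc (gsc sg th c)));
  intros.
  - simpl. destruct H as [H _]. apply H; auto.
  - simpl. intros xi zeta [b0 E] Hq. simpl in Hq.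
    destruct Hq as [E' [u [Heq [Hu HB]]]]. simpl in Heq |- *. subst E.
    rewrite fill_ecomp. simpl. apply L_beta.
    + apply (proj1 (proj2 (CR A))). exact Hu.
    + intros u' Hu'. rewrite lam_subst.
      assert (HR : Rt B (gs (fun n => match n with 0 => u' | S m => ren_tm xi zeta (sg m) end)
                         (renth xi zeta th) b)).
      { apply H. destruct H0 as [H0 H1]. split.
        - intros [|x] A0 Hx; simpl in Hx.
          + inversion Hx; subst. apply (Rt_rt _ u u'); auto.
          + apply Rt_ren. auto.
        - intros a A0 Ha. unfold renth. apply (Kt_ren A0 (th a)). auto. }
      specialize (HR (fun n => n) (fun n => n) (b0, E') HB). simpl in HR.
      rewrite (proj1 ren_id) in HR. exact HR.
  - simpl. intros xi zeta [b0 E] Hq. simpl.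
    assert (HK : Kt (Arr A B) (b0, ecomp E (EApp Hole (ren_tm xi zeta (gs sg th s))))).
    { simpl. exists E, (ren_tm xi zeta (gs sg th s)). split; auto. split; auto.
      apply Rt_ren. apply H0; auto. }
    specialize (H sg th H1 xi zeta _ HK). simpl in H. rewrite fill_ecomp in H. exact H.
  - simpl. intros xi zeta [b0 E] Hq. simpl in Hq |- *.
    specialize (Hq (fun n => n) (fun n => n) 0). rewrite ren_idE in Hq. exact Hq.
  - simpl. intros xi zeta [b0 E] Hq.
    assert (HK : Kt TNat (b0, ecomp E (ESuc Hole))).
    { simpl. intros xi' zeta' n. rewrite ren_ecomp, fill_ecomp. simpl in Hq |- *.
      exact (Hq xi' zeta' (S n)). }
    specialize (H sg th H0 xi zeta _ HK). simpl in H |- *. rewrite fill_ecomp in H. exact H.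
  - simpl. intros xi zeta [b0 E] Hq.
    assert (HK : Kt TNat (b0, ecomp E (ENrec A (ren_tm xi zeta (gs sg th r))
                                           (ren_tm xi zeta (gs sg th s)) Hole))).
    { simpl. intros xi' zeta' n. rewrite ren_ecomp, fill_ecomp. simpl.
      apply NrecNum.
      - apply (Kt_ren A (b0, E)). auto.
      - apply Rt_ren. apply Rt_ren. apply H; auto.
      - apply Rt_ren. apply Rt_ren. apply H0; auto. }
    specialize (H1 sg th H2 xi zeta _ HK). simpl in H1 |- *. rewrite fill_ecomp in H1. exact H1.
  - simpl. intros xi zeta [b0 E] Hq. simpl.
    apply (mu_lemma (gsc Var (thbE b0 E) (ren_cmd xi (up zeta)
             (gsc (fun n => lift_mu (sg n)) (thM th) c)))).
    + rewrite mu_subst. apply H. destruct H0 as [H0 H1]. split.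
      * intros x A0 Hx. apply Rt_ren. auto.
      * intros [|a] A0 Ha; simpl in Ha.
        -- inversion Ha; subst. exact Hq.
        -- unfold renth. apply (Kt_ren A0 (th a)). auto.
    + pose proof (proj2 (proj2 (CR A)) (b0, E) Hq (Var 0) (stuck_var 0)) as HH.
      simpl in HH. apply SNc_Pass_inv in HH. eapply SNE_fill_inv; eauto.
    + reflexivity.
  - simpl. destruct H0 as [H0 H1].
    specialize (H sg th (conj H0 H1) (fun n => n) (fun n => n) (th a) (H1 a A e)).
    rewrite (proj1 ren_id) in H. exact H.
Qed.

Lemma SN_no_chain : forall x, SN x -> forall f, f 0 = x -> (forall n, st (f n) (f (S n))) -> False.
Proof.
  intros x H. induction H as [x Hx IH]. intros f Hf Hs.
  apply (IH (f 1)) with (f := fun n => f (S n)).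
  - rewrite <- Hf. apply Hs.
  - reflexivity.
  - intros n. apply Hs.
Qed.

Theorem mainTheorem13 :
  forall (G D : list ty) (t : tm) (A : ty),
    has_type G D t A ->
    ~ (exists f : nat -> tm, f 0 = t /\ forall n, step (f n) (f (S n))).
Proof.
  intros G D t A Ht [f [Hf Hs]].
  set (th0 := fun a => match nth_error D a with Some B => (a, ctx0 B) | None => (a, Hole) end).
  assert (Henv : EnvOK G D Var th0).
  { split.
    - intros x B Hx xi zeta q Hq. simpl. apply (proj2 (proj2 (CR B))); auto. apply stuck_var.
    - intros a B Ha. unfold th0. rewrite Ha. apply (proj1 (CR B)). }
  pose proof (fund G D t A Ht Var th0 Henv) as HR.
  apply (proj1 (proj2 (CR A))) in HR. apply SN_gs_inv in HR.
  apply (SN_no_chain t HR f Hf). intros n. apply (proj1 step_st). apply Hs.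
Qed.
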